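(* Every $F_{\sigma}$-ideal on $\omega$ is good.
   Context: An ideal on $\omega$ is $F_\sigma$ if it is an $F_\sigma$ subset of $2^\omega$ (via characteristic functions). For an ideal $\mathcal{J}$, $\mathcal{J}^+$ denotes the sets not in $\mathcal{J}$. $\mathcal{J}$ is called good if every uncountable family $\mathcal{F}\subseteq\mathcal{J}^{+}$ has a subfamily $\{B_{n}:n\in\omega\}\subseteq\mathcal{F}$ such that for every $f\in\omega^{\omega}$ there is a sequence $\{C_{n}:n\in\omega\}\subseteq\mathcal{J}$ with $C_{n}\subseteq B_{n}\setminus f(n)$ for every $n$ such that $\bigcup_{n}C_{n}\in\mathcal{J}^{+}$. *)

(* Defs.v *)
From HB Require Import structures.
From mathcomp Require Import all_boot all_order all_algebra.
From mathcomp Require Import all_classical all_reals all_analysis borel_hierarchy.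
Set Implicit Arguments.
Unset Strict Implicit.
Unset Printing Implicit Defensive.
Local Open Scope classical_set_scope.

Definition chi (A : set nat) : cantor_space := fun n => `[< A n >].

Definition is_ideal (J : set (set nat)) : Prop :=
  [/\ (forall A B : set nat, A `<=` B -> J B -> J A),
      (forall A B : set nat, J A -> J B -> J (A `|` B)),
      (forall A : set nat, finite_set A -> J A) &
      ~ J setT].

Definition Fsigma_ideal (J : set (set nat)) : Prop :=
  is_ideal J /\ Fsigma (chi @` J).

Definition Jplus (J : set (set nat)) : set (set nat) := ~` J.

(* good ideals; B \ f(n) = B minus {0,...,f(n)-1} = B `\` `I_(f n) *)
Definition good (J : set (set nat)) : Prop :=
  forall Fam : set (set nat), Fam `<=` Jplus J -> ~ countable Fam ->
  exists B : nat -> set nat,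
    injective B /\ (forall n, Fam (B n)) /\
    forall f : nat -> nat, exists C : nat -> set nat,
      (forall n, J (C n)) /\ (forall n, C n `<=` B n `\` `I_(f n)) /\
      Jplus J (\bigcup_n C n).

(* Main.v *)
Require Import Defs.
From mathcomp Require Import all_boot all_order all_algebra.
From mathcomp Require Import all_classical all_reals all_analysis.
Local Open Scope classical_set_scope.

Lemma closed_coord (i : nat) : closed [set a : cantor_space | a i].
Proof.
have := (@continuous_closedP cantor_space bool (@proj nat (fun _ => bool) i)).1.
by move=> /(_ (@proj_continuous nat (fun _ => bool) i) [set true] (discrete_closed _)).
Qed.

Lemma key_compact (G : set cantor_space) (X : set nat) :
  closed G -> (forall m, exists2 a, G a & forall i, (i < m)%N -> X i -> a i) ->
  exists2 a, G a & forall i, X i -> a i.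
Proof.
move=> clG H.
pose S := fun m : nat => G `&` \bigcap_(i in [set i | (i < m)%N /\ X i])
   [set a : cantor_space | a i].
have clS m : closed (S m).
  by apply: closedI => //; apply: closed_bigI => i _; apply: closed_coord.
have := cantor_space_compact; rewrite compact_In0 => /(_ nat setT S).
case.
- by exists S => // i _; rewrite setTI.
- move=> D' _; pose M := (\max_(j <- finmap.enum_fset D') j.+1)%N.
  have [a Ga Ha] := H M; exists a => j /= jD; split => // i [ij Xi].
  apply: Ha => //; apply: (leq_trans ij); apply: ltnW.
  by apply: (@leq_bigmax_seq _ _ _ (fun j => j.+1) j).
- move=> a Sa; exists a; first by case: (Sa 0%N I).
  by move=> i Xi; case: (Sa i.+1 I) => _; apply; split.
Qed.

Theorem mainTheorem17 (J : set (set nat)) : Fsigma_ideal J -> good J.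
Proof.
move=> [[hered unionJ finJ notT] [K clK eqK]] Fam sub uncount.
have infF : infinite_set Fam.
  by move=> fin; apply: uncount; apply: finite_set_countable.
have [B [Binj BF]] : exists B : nat -> set nat, injective B /\ forall n, Fam (B n).
  move: infF => /infiniteP/card_leP[g].
  exists (fun n => \val (g (SigSub (@mem_set _ [set: nat] n I)))); split.
    move=> x y Bxy.
    by have := @inj _ _ _ g _ _ (mem_set I) (mem_set I) (val_inj Bxy); case.
  by move=> n; case: (g _) => /= x; rewrite inE.
exists B; split => //; split => //.
move=> f.
pose X n := B n `\` `I_(f n).
have XJ n : ~ J (X n).
  move=> JX; apply: (sub (B n) (BF n)).
  apply: (hered _ (X n `|` (B n `&` `I_(f n)))).
    by move=> x Bx; case: (pselect (`I_(f n) x)) => h; [right|left].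
  by apply: unionJ => //; apply: finJ; apply: finite_setIr; apply: finite_II.
have Hm n : exists m, forall a, K n a -> ~ (forall i, (i < m)%N -> X n i -> a i).
  apply: contrapT => Hn.
  have [a Ka Xa] : exists2 a, K n a & forall i, X n i -> a i.
    apply: key_compact => // m.
    apply: contrapT => Hm; apply: Hn; exists m => a Ka Ha; apply: Hm.
    by exists a.
  have : (chi @` J) a by rewrite eqK; exists n.
  case=> A JA chiA; apply: (XJ n); apply: (hered _ A) => // i /Xa.
  by rewrite -chiA /chi => /asboolP.
have [m Hm'] := choice Hm.
exists (fun n => X n `&` `I_(m n)); split.
  by move=> n; apply: finJ; apply: finite_setIr; apply: finite_II.
split; first by move=> n x [].
move=> JU.
have : (chi @` J) (chi (\bigcup_n (X n `&` `I_(m n)))) by exists (\bigcup_n (X n `&` `I_(m n))).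
rewrite eqK => -[k _ Kk]; apply: (Hm' k _ Kk) => i im Xi.
by apply/asboolP; exists k => //; split.
Qed.
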